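(* Let $\psi:(\mathcal A,\jmath)_K\to(\mathcal B,\imath)_K$ be a monomorphism of nets of $\mathrm{C}^*$-algebras over the poset $K$ (each $\psi_o:\mathcal A_o\to\mathcal B_o$ an injective ${}^*$-morphism with $\psi_o\circ\jmath_{oa}=\imath_{oa}\circ\psi_a$). Then the domain of the Čech cocycle of $(\mathcal B,\imath)_K$ is contained in the domain of the Čech cocycle of $(\mathcal A,\jmath)_K$; that is, whenever $(F;\tilde o,o)$ is a $1$-simplex for which there is a ${}^*$-isomorphism $\xi:\mathcal B^F_o\to\mathcal B^F_{\tilde o}$ with $\xi\circ\imath_{oa}=\imath_{\tilde oa}$ for all $a\in F$, there is a ${}^*$-isomorphism $\zeta:\mathcal A^F_o\to\mathcal A^F_{\tilde o}$ with $\zeta\circ\jmath_{oa}=\jmath_{\tilde oa}$ for all $a\in F$.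
   Context: A net of $\mathrm{C}^*$-algebras $(\mathcal A,\jmath)_K$ over a poset $K$: unital $\mathrm{C}^*$-algebras $\mathcal A_o$ and unital injective ${}^*$-morphisms $\jmath_{oa}:\mathcal A_a\to\mathcal A_o$ ($a\le o$) with $\jmath_{oa}\circ\jmath_{ae}=\jmath_{oe}$. For nonempty $F,S\subseteq K$, $F\le S$ means every element of $F$ is $\le$ every element of $S$. $\Sigma^\circ_*(K)$ is the simplicial set whose $n$-simplices are strings $(F;o_{n+1},\dots,o_1)$ with $o_i\in K$ and $F$ a nonempty subset of $K$ with $F\le\{o_{n+1},\dots,o_1\}$. For $(F;o)$, $\mathcal A^F_o$ is the $\mathrm{C}^*$-subalgebra of $\mathcal A_o$ generated by the $\jmath_{oa}(\mathcal A_a)$, $a\in F$. The Čech cocycle is defined on the $1$-simplex $(F;\tilde o,o)$ if there is a ${}^*$-isomorphism $\zeta^F_{\tilde oo}:\mathcal A^F_o\to\mathcal A^F_{\tilde o}$ with $\zeta^F_{\tilde oo}\circ\jmath_{oa}=\jmath_{\tilde oa}$ for all $a\in F$ (necessarily unique); the domain of the Čech cocycle is the largest symmetric subsimplicial set of $\Sigma^\circ_*(K)$ on whose $1$-simplices it is defined. *)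

(* Defs.v *)
From mathcomp Require Import all_boot all_order all_algebra.
From mathcomp Require Import complex reals.
Set Implicit Arguments. Unset Strict Implicit. Unset Printing Implicit Defensive.
Import Order.TTheory GRing.Theory Num.Theory.
Local Open Scope ring_scope.

Definition cabs (R : realType) (c : R[i]) : R :=
  Num.sqrt (complex.Re c ^+ 2 + complex.Im c ^+ 2).

Record cstar_algebra (R : realType) := CStarAlgebra {
  cs_car :> algType R[i];
  cs_star : cs_car -> cs_car;
  cs_norm : cs_car -> R;
  cs_starD : forall x y, cs_star (x + y) = cs_star x + cs_star y;
  cs_starZ : forall (c : R[i]) x, cs_star (c *: x) = (Num.conj c) *: cs_star x;
  cs_starM : forall x y, cs_star (x * y) = cs_star y * cs_star x;
  cs_starK : forall x, cs_star (cs_star x) = x;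
  cs_norm_eq0 : forall x, cs_norm x = 0 -> x = 0;
  cs_normD : forall x y, cs_norm (x + y) <= cs_norm x + cs_norm y;
  cs_normZ : forall (c : R[i]) x, cs_norm (c *: x) = cabs c * cs_norm x;
  cs_normM : forall x y, cs_norm (x * y) <= cs_norm x * cs_norm y;
  cs_cstar : forall x, cs_norm (cs_star x * x) = cs_norm x ^+ 2;
  cs_complete : forall u : nat -> cs_car,
    (forall e : R, 0 < e -> exists N, forall m n, (N <= m)%N -> (N <= n)%N ->
        cs_norm (u m - u n) < e) ->
    exists l, forall e : R, 0 < e -> exists N, forall n, (N <= n)%N ->
        cs_norm (u n - l) < e
}.

Section Defs.
Variable R : realType.

Definition cs_cvg (A : cstar_algebra R) (u : nat -> A) (l : A) : Prop :=
  forall e : R, 0 < e -> exists N, forall n, (N <= n)%N -> cs_norm (u n - l) < e.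

Definition is_cstar_subalg (A : cstar_algebra R) (S : A -> Prop) : Prop :=
  [/\ S 1,
      forall x y, S x -> S y -> S (x + y),
      forall (c : R[i]) x, S x -> S (c *: x),
      forall x y, S x -> S y -> S (x * y)
    & (forall x, S x -> S (cs_star x)) /\
      (forall u l, (forall n, S (u n)) -> cs_cvg u l -> S l)].

Definition cstar_gen (A : cstar_algebra R) (X : A -> Prop) : A -> Prop :=
  fun x => forall S, is_cstar_subalg S -> (forall y, X y -> S y) -> S x.

Definition star_morph (A B : cstar_algebra R) (f : A -> B) : Prop :=
  [/\ forall x y, f (x + y) = f x + f y,
      forall (c : R[i]) x, f (c *: x) = c *: f x,
      forall x y, f (x * y) = f x * f y,
      forall x, f (cs_star x) = cs_star (f x)
    & f 1 = 1].

Definition star_iso_on (A B : cstar_algebra R) (S : A -> Prop) (T : B -> Prop)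
    (f : A -> B) : Prop :=
  [/\ forall x y, S x -> S y -> f (x + y) = f x + f y,
      forall (c : R[i]) x, S x -> f (c *: x) = c *: f x,
      forall x y, S x -> S y -> f (x * y) = f x * f y,
      forall x, S x -> f (cs_star x) = cs_star (f x)
    & [/\ forall x, S x -> T (f x),
      forall x y, S x -> S y -> f x = f y -> x = y
    & forall z, T z -> exists2 x, S x & f x = z]].

(** A net of C*-algebras over the poset K : the maps j a o are only
    relevant for a <= o (j is total only for convenience). *)
Definition is_net (d : Order.disp_t) (K : porderType d)
    (A : K -> cstar_algebra R) (j : forall a o : K, A a -> A o) : Prop :=
  (forall a o : K, (a <= o)%O -> star_morph (j a o) /\ injective (j a o)) /\
  (forall e a o : K, (e <= a)%O -> (a <= o)%O ->
     forall x, j a o (j e a x) = j e o x).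

Definition net_mono (d : Order.disp_t) (K : porderType d)
    (A B : K -> cstar_algebra R) (j : forall a o : K, A a -> A o)
    (i : forall a o : K, B a -> B o) (psi : forall o : K, A o -> B o) : Prop :=
  (forall o : K, star_morph (psi o) /\ injective (psi o)) /\
  (forall a o : K, (a <= o)%O -> forall x, psi o (j a o x) = i a o (psi a x)).

Definition loc_alg (d : Order.disp_t) (K : porderType d)
    (A : K -> cstar_algebra R) (j : forall a o : K, A a -> A o)
    (F : K -> Prop) (o : K) : A o -> Prop :=
  cstar_gen (fun y => exists a, exists2 x, F a & y = j a o x).

(** the Čech cocycle of (A, j) is defined on the 1-simplex (F; ot, o) *)
Definition cech_defined (d : Order.disp_t) (K : porderType d)
    (A : K -> cstar_algebra R) (j : forall a o : K, A a -> A o)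
    (F : K -> Prop) (ot o : K) : Prop :=
  exists zeta : A o -> A ot,
    star_iso_on (@loc_alg d K A j F o) (@loc_alg d K A j F ot) zeta /\
    forall a, F a -> forall x, zeta (j a o x) = j a ot x.

End Defs.

(* Main.v *)
Require Import Defs.
From mathcomp Require Import all_boot all_order all_algebra.
From mathcomp Require Import complex reals.
From mathcomp Require Import classical_sets ring lra.
From Stdlib Require Import ClassicalEpsilon.

Module Aux.
Set Implicit Arguments. Unset Strict Implicit. Unset Printing Implicit Defensive.
Import Order.TTheory GRing.Theory Num.Theory.
Local Open Scope ring_scope.
Local Open Scope complex_scope.


Section Basics.
Variable R : realType.

Lemma conj_real (r : R) : Num.conj (r%:C) = r%:C.
Proof. by rewrite /Num.conj /=; simpc. Qed.
Lemma cabs_real (r : R) : cabs (r%:C) = `|r|.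
Proof. by rewrite /cabs /= expr0n /= addr0 sqrtr_sqr. Qed.
Lemma conj_i : Num.conj ('i : R[i]) = - 'i.
Proof. by rewrite /Num.conj /=; simpc. Qed.
Lemma mul_ii : ('i : R[i]) * 'i = -1.
Proof. by rewrite -expr2 sqr_i. Qed.

Lemma real_cauchy (r : nat -> R) (M : R) :
  (forall n, r n <= r n.+1) -> (forall n, r n <= M) ->
  forall e, 0 < e -> exists N, forall m n, (N <= n)%N -> (n <= m)%N -> r m - r n < e.
Proof.
move=> incr bnd e e0.
have mono : forall n m, (n <= m)%N -> r n <= r m.
  move=> n m /subnK <-; elim: (m - n)%N => [|k IH]; first by rewrite add0n.
  by rewrite addSn (le_trans IH).
pose E : set R := fun x => exists n, x = r n.
have hs : has_sup E by split; [exists (r 0%N); exists 0%N | exists M => x [n ->]].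
have [x [N ->] hx] := sup_adherent e0 hs.
exists N => m n Nn nm.
have : r m <= sup E by apply: sup_upper_bound => //; exists m.
have := mono _ _ Nn. lra.
Qed.
End Basics.


Section CS.
Variable R : realType.
Variable A : cstar_algebra R.
Local Notation N := (@cs_norm R A).
Local Notation st := (@cs_star R A).
Implicit Types x y z : A.

Lemma nR (r : R) x : N (r%:C *: x) = `|r| * N x.
Proof. by rewrite cs_normZ cabs_real. Qed.

Lemma n0 : N 0 = 0.
Proof. by rewrite -{1}(scaler0 _ (0 : R)%:C : _ = (0:A)) cs_normZ cabs_real normr0 mul0r. Qed.
Lemma nN x : N (- x) = N x.
Proof.
have -> : - x = (-1 : R)%:C *: x by rewrite -scaleN1r; congr (_ *: _); simpc.
by rewrite nR normrN normr1 mul1r.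
Qed.
Lemma n_ge0 x : 0 <= N x.
Proof.
have := cs_normD x (- x). rewrite subrr n0 nN. lra.
Qed.
Lemma nBC x y : N (x - y) = N (y - x).
Proof. by rewrite -nN opprB. Qed.
Lemma nD x y : N (x + y) <= N x + N y. Proof. exact: cs_normD. Qed.
Lemma nB x y : N (x - y) <= N x + N y.
Proof. by rewrite -(nN y) nD. Qed.
Lemma nM x y : N (x * y) <= N x * N y. Proof. exact: cs_normM. Qed.
Lemma n_eq0 x : N x = 0 -> x = 0. Proof. exact: cs_norm_eq0. Qed.
Lemma n_le0 x : N x <= 0 -> x = 0.
Proof. move=> h; apply: n_eq0; apply/eqP; rewrite eq_le h n_ge0. done. Qed.
Lemma n_tri x y z : N (x - z) <= N (x - y) + N (y - z).
Proof. by apply: le_trans (nD _ _); rewrite addrA subrK. Qed.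

Lemma st0 : st 0 = 0.
Proof. have := cs_starD (0 : A) 0. rewrite addr0 => /eqP. rewrite -subr_eq0 opprD addrA subrr sub0r oppr_eq0. by move/eqP. Qed.
Lemma stD x y : st (x + y) = st x + st y. Proof. exact: cs_starD. Qed.
Lemma stR (r : R) x : st (r%:C *: x) = r%:C *: st x.
Proof. by rewrite cs_starZ conj_real. Qed.
Lemma stN x : st (- x) = - st x.
Proof. by apply/eqP; rewrite -subr_eq0 opprK -stD addNr st0. Qed.
Lemma stB x y : st (x - y) = st x - st y. Proof. by rewrite stD stN. Qed.
Lemma stM x y : st (x * y) = st y * st x. Proof. exact: cs_starM. Qed.
Lemma stK x : st (st x) = x. Proof. exact: cs_starK. Qed.
Lemma st1 : st 1 = 1.
Proof. by rewrite -[LHS]mulr1 -[X in _ * X](stK 1) -stM mulr1 stK. Qed.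

Lemma n_st x : N (st x) = N x.
Proof.
suff H : forall y, N y <= N (st y).
  by apply/eqP; rewrite eq_le H -{2}(stK x) H.
move=> y. have h := cs_cstar y. have := nM (st y) y. rewrite h expr2.
have := n_ge0 y. have := n_ge0 (st y). nra.
Qed.

Lemma n1 : N 1 <= 1.
Proof. have := cs_cstar (1 : A). rewrite st1 mulr1 expr2. have := n_ge0 1. nra. Qed.

Lemma n_sa h : st h = h -> N (h * h) = N h ^+ 2.
Proof. by move=> e; rewrite -{1}e cs_cstar. Qed.
End CS.


Section Cvg.
Variable R : realType.
Variable A : cstar_algebra R.
Local Notation N := (@cs_norm R A).
Local Notation st := (@cs_star R A).
Implicit Types x y z : A.

Lemma cvg_bound (u v : nat -> A) a b (x m C : R) :
  0 <= C -> cs_cvg u a -> cs_cvg v b ->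
  (forall n, x <= m + C * (N (u n - a) + N (v n - b))) -> x <= m.
Proof.
move=> C0 cu cv H. have [//|xm] := leP x m.
have e0 : 0 < (x - m) / (2 * (C + 1)).
  by apply: divr_gt0; lra.
have [N1 h1] := cu _ e0. have [N2 h2] := cv _ e0.
have := H (maxn N1 N2). have := h1 (maxn N1 N2) (leq_maxl _ _).
have := h2 (maxn N1 N2) (leq_maxr _ _).
set e := (x - m) / (2 * (C + 1)).
have he : e * (2 * (C + 1)) = x - m by rewrite /e mulfVK //; lra.
move: (n_ge0 (u (maxn N1 N2) - a)) (n_ge0 (v (maxn N1 N2) - b)). nra.
Qed.

Lemma cvg_bound1 (u : nat -> A) a (x m C : R) :
  0 <= C -> cs_cvg u a -> (forall n, x <= m + C * N (u n - a)) -> x <= m.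
Proof.
move=> C0 cu H; apply: (@cvg_bound u u a a x m C) => // n.
apply: le_trans (H n) _. rewrite lerD2l. apply: ler_wpM2l => //.
by rewrite lerDl n_ge0.
Qed.

Lemma cvg_shift (u : nat -> A) a : cs_cvg u a -> cs_cvg (fun n => u n.+1) a.
Proof. move=> cu e e0; have [N1 h] := cu e e0; exists N1 => n hn; apply: h; exact: leqW. Qed.

Lemma cvg_cauchy (u : nat -> A) a : cs_cvg u a ->
  forall e, 0 < e -> exists N0, forall m n, (N0 <= m)%N -> (N0 <= n)%N -> N (u m - u n) < e.
Proof.
move=> cu e e0. have e2 : 0 < e / 2 by apply: divr_gt0.
have [N0 h] := cu _ e2. exists N0 => m n hm hn.
apply: le_lt_trans (n_tri (u m) a (u n)) _.
have := h m hm; have := h n hn. rewrite (nBC a). lra.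
Qed.

Lemma cauchy_cvg (u : nat -> A) :
  (forall e, 0 < e -> exists N0, forall m n, (N0 <= m)%N -> (N0 <= n)%N -> N (u m - u n) < e) ->
  exists a, cs_cvg u a.
Proof. move=> H; have [l hl] := cs_complete H. by exists l. Qed.


Lemma cvg_bound2 (A' : cstar_algebra R) (u : nat -> A) (v : nat -> A') a b (x m C : R) :
  0 <= C -> cs_cvg u a -> cs_cvg v b ->
  (forall n, x <= m + C * (N (u n - a) + cs_norm (v n - b))) -> x <= m.
Proof.
move=> C0 cu cv H. have [//|xm] := leP x m.
have e0 : 0 < (x - m) / (2 * (C + 1)).
  by apply: divr_gt0; lra.
have [N1 h1] := cu _ e0. have [N2 h2] := cv _ e0.
have := H (maxn N1 N2). have := h1 (maxn N1 N2) (leq_maxl _ _).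
have := h2 (maxn N1 N2) (leq_maxr _ _).
set e := (x - m) / (2 * (C + 1)).
have he : e * (2 * (C + 1)) = x - m by rewrite /e mulfVK //; lra.
move: (n_ge0 (u (maxn N1 N2) - a)) (n_ge0 (v (maxn N1 N2) - b)). nra.
Qed.
End Cvg.


Section Half.
Variable R : realType.
Lemma half_half : (2^-1 : R)%:C + (2^-1 : R)%:C = 1 :> R[i].
Proof. apply/eqP; rewrite eq_complex /= addr0 eqxx andbT. apply/eqP. by field. Qed.
End Half.

Section Sqrt.
Variable R : realType.
Variable A : cstar_algebra R.
Local Notation N := (@cs_norm R A).
Local Notation st := (@cs_star R A).
Implicit Types x y z : A.
Local Notation h := ((2^-1 : R)%:C).

Lemma halfKs x : h *: x + h *: x = x.
Proof. by rewrite -scalerDl half_half scale1r. Qed.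

Lemma nhalf x : N (h *: x) = 2^-1 * N x.
Proof. rewrite nR ger0_norm //. by rewrite invr_ge0. Qed.

Fixpoint Yseq (t : A) (n : nat) : A :=
  match n with 0 => 0 | n'.+1 => h *: (t + Yseq t n' * Yseq t n') end.

Fixpoint rseq (n : nat) : R :=
  match n with 0 => 0 | n'.+1 => 2^-1 * (1 + rseq n' * rseq n') end.

Lemma rseq_bnd n : 0 <= rseq n <= 1.
Proof. elim: n => [|n IH] /=; first by rewrite lexx ler01. move: IH; nra. Qed.

Lemma rseq_incr n : rseq n <= rseq n.+1.
Proof.
elim: n => [|n IH] /=; first by rewrite mulr_ge0 // ?invr_ge0 // addr_ge0 // mulr_ge0.
have := rseq_bnd n; have := rseq_bnd n.+1 => /=. nra.
Qed.

Lemma Yseq_bnd t : N t <= 1 -> forall n,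
  N (Yseq t n) <= rseq n /\ N (Yseq t n.+1 - Yseq t n) <= rseq n.+1 - rseq n.
Proof.
move=> ht. elim=> [|n [IH1 IH2]].
  by rewrite /= !subr0 n0 mulr0 addr0 mulr0 addr0 nhalf lexx; split=> //; nra.
have b1 : N (Yseq t n.+1) <= rseq n.+1.
  rewrite /= nhalf. apply: ler_wpM2l; first by rewrite invr_ge0.
  apply: le_trans (nD _ _) _. apply: lerD => //. apply: le_trans (nM _ _) _.
  have := n_ge0 (Yseq t n). have := rseq_bnd n. nra.
split=> //.
set Y1 := Yseq t n.+1. set Y0 := Yseq t n.
have e1 : Yseq t n.+2 = h *: (t + Y1 * Y1) by [].
have e0 : Y1 = h *: (t + Y0 * Y0) by [].
have -> : Yseq t n.+2 - Y1 = h *: ((Y1 - Y0) * Y1 + Y0 * (Y1 - Y0)).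
  rewrite e1 [X in _ - X]e0 -scalerBr. congr (_ *: _).
  rewrite mulrBl mulrBr addrA subrK. by rewrite opprD addrACA subrr add0r.
rewrite (nhalf ((Y1 - Y0) * Y1 + _)). apply: le_trans (_ : 2^-1 * ((rseq n.+1 - rseq n) * rseq n.+1 + rseq n * (rseq n.+1 - rseq n)) <= _).
  apply: ler_wpM2l; first by rewrite invr_ge0.
  apply: le_trans (nD _ _) _. apply: lerD; apply: le_trans (nM _ _) _.
    apply: ler_pM => //; exact: n_ge0.
  apply: ler_pM => //; exact: n_ge0.
have -> : rseq n.+2 = 2^-1 * (1 + rseq n.+1 * rseq n.+1) by [].
have -> : rseq n.+1 = 2^-1 * (1 + rseq n * rseq n) by [].
set b := rseq n. rewrite le_eqVlt; apply/orP; left; apply/eqP. by field.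
Qed.


Lemma zL1 (a b c : A) : (a - b) + (b - c) = a - c. Proof. by rewrite addrA subrK. Qed.
Lemma zL2 (a b : A) : (a + a) - (b + b) = (a - b) + (a - b). Proof. by rewrite opprD addrACA. Qed.
Lemma zL3 (t a b : A) : (t + a) - (t + b) = a - b. Proof. by rewrite opprD addrACA subrr add0r. Qed.
Lemma zL4 (a b : A) : a * a - b * b = (a - b) * a + b * (a - b).
Proof. by rewrite mulrBl mulrBr zL1. Qed.

Lemma Yseq_tele t : N t <= 1 -> forall n k,
  N (Yseq t (n + k) - Yseq t n) <= rseq (n + k) - rseq n.
Proof.
move=> ht n; elim=> [|k IH]; first by rewrite addn0 !subrr n0.
apply: le_trans (n_tri _ (Yseq t (n + k)) _) _.
rewrite addnS. have [_ hk] := Yseq_bnd ht (n + k). move: hk IH; lra.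
Qed.

Lemma Yseq_cauchy t : N t <= 1 ->
  forall e, 0 < e -> exists N0, forall m n, (N0 <= m)%N -> (N0 <= n)%N ->
    N (Yseq t m - Yseq t n) < e.
Proof.
move=> ht e e0.
have [N0 hN] := real_cauchy rseq_incr (fun n => proj2 (andP (rseq_bnd n))) e0.
exists N0.
suff H : forall m n, (N0 <= n)%N -> (n <= m)%N -> N (Yseq t m - Yseq t n) < e.
  move=> m n hm hn. have [nm|mn] := leqP n m; first exact: H.
  rewrite nBC; apply: H => //; exact: ltnW.
move=> m n hn nm. apply: le_lt_trans (hN m n hn nm).
by rewrite -(subnKC nm) Yseq_tele.
Qed.

Lemma subalg0 (S : A -> Prop) : is_cstar_subalg S -> S 0.
Proof. case=> S1 _ Sz _ _. by rewrite -(scale0r 1); apply: Sz. Qed.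
Lemma subalgN (S : A -> Prop) x : is_cstar_subalg S -> S x -> S (- x).
Proof. case=> _ _ Sz _ _ Sx. by rewrite -scaleN1r; apply: Sz. Qed.
Lemma subalgB (S : A -> Prop) x y : is_cstar_subalg S -> S x -> S y -> S (x - y).
Proof. move=> hS Sx Sy. case: (hS) => _ Sa _ _ _. by apply: Sa => //; apply: subalgN. Qed.

Lemma Yseq_in (S : A -> Prop) t : is_cstar_subalg S -> S t -> forall n, S (Yseq t n).
Proof.
move=> hS St; elim=> [|n IH] /=; first exact: subalg0.
case: hS => _ Sa Sz Sm _. apply: Sz; apply: Sa => //; exact: Sm.
Qed.

Lemma Yseq_st t : st t = t -> forall n, st (Yseq t n) = Yseq t n.
Proof. move=> ht; elim=> [|n IH] /=; first exact: st0. by rewrite stR stD stM ht IH. Qed.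

Lemma Yseq_comm t w : w * t = t * w -> forall n, w * Yseq t n = Yseq t n * w.
Proof.
move=> hw; elim=> [|n IH] /=; first by rewrite mulr0 mul0r.
rewrite -scalerAr -scalerAl mulrDr mulrDl hw mulrA IH -!mulrA IH. done.
Qed.

Lemma sqrt_fix (S : A -> Prop) t : is_cstar_subalg S -> S t -> N t <= 1 ->
  exists Y, [/\ S Y, Y + Y = t + Y * Y, N Y <= 1,
     (st t = t -> st Y = Y) & (forall w, w * t = t * w -> w * Y = Y * w)].
Proof.
move=> hS St ht. have [Y cY] := cauchy_cvg (Yseq_cauchy ht).
have bY : N Y <= 1.
  apply: (@cvg_bound1 _ _ _ Y (N Y) 1 1 ler01 cY) => n.
  rewrite mul1r. have := nD (Yseq t n) (Y - Yseq t n).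
  rewrite [_ + (Y - _)]addrC subrK (nBC Y) => H.
  have [H1 _] := Yseq_bnd ht n. have /andP[_ H2] := rseq_bnd n. lra.
have bn : forall n, N (Yseq t n) <= 1.
  move=> n; have [H1 _] := Yseq_bnd ht n. have /andP[_ H2] := rseq_bnd n. lra.
have cY1 := cvg_shift cY.
exists Y; split.
- case: (hS) => _ _ _ _ [_ Slim]. apply: Slim cY. exact: Yseq_in.
- apply/eqP; rewrite -subr_eq0; apply/eqP; apply: n_le0.
  apply: (@cvg_bound _ _ _ _ _ _ _ 0 2 _ cY1 cY) => // n.
  set Yn := Yseq t n; set Yn1 := Yseq t n.+1.
  have eq1 : Yn1 + Yn1 = t + Yn * Yn by rewrite /Yn1 /= halfKs.
  apply: le_trans (n_tri _ (Yn1 + Yn1) _) _. rewrite zL2 eq1 zL3 zL4 add0r.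
  have h1 := nD (Y - Yn1) (Y - Yn1). rewrite (nBC Y) in h1.
  have h2 := nD ((Yn - Y) * Yn) (Y * (Yn - Y)).
  have h3 := nM (Yn - Y) Yn. have h4 := nM Y (Yn - Y).
  have := bn n. have := n_ge0 (Yn - Y). have := n_ge0 Y. have := n_ge0 Yn. nra.
- exact: bY.
- move=> stt. apply/eqP; rewrite -subr_eq0; apply/eqP; apply: n_le0.
  apply: (@cvg_bound _ _ _ _ _ _ _ 0 1 _ cY cY) => // n.
  have -> : st Y - Y = st (Y - Yseq t n) + (Yseq t n - Y).
    by rewrite stB Yseq_st // addrA subrK.
  apply: le_trans (nD _ _) _. rewrite n_st (nBC Y). lra.
- move=> w hw. apply/eqP; rewrite -subr_eq0; apply/eqP; apply: n_le0.
  apply: (@cvg_bound _ _ _ _ _ _ _ 0 (N w) _ cY cY) => //; first exact: n_ge0.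
  move=> n.
  have -> : w * Y - Y * w = w * (Y - Yseq t n) + (Yseq t n - Y) * w.
    by rewrite mulrBr mulrBl Yseq_comm // addrA subrK.
  apply: le_trans (nD _ _) _. rewrite add0r.
  have h1 := nM w (Y - Yseq t n). have h2 := nM (Yseq t n - Y) w.
  rewrite (nBC Y) in h1. have := n_ge0 w. have := n_ge0 (Yseq t n - Y). nra.
Qed.
End Sqrt.


Section Z.
Variable R : realType.
Variable A : cstar_algebra R.
Local Notation N := (@cs_norm R A).
Local Notation st := (@cs_star R A).
Implicit Types x y z : A.
Local Notation h := ((2^-1 : R)%:C).

Lemma two_C : (2 : R)%:C = 1 + 1 :> R[i].
Proof. by apply/eqP; rewrite eq_complex /= addr0 !eqxx. Qed.

Lemma nDD x : N (x + x) = 2 * N x.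
Proof. have -> : x + x = (2 : R)%:C *: x by rewrite two_C scalerDl scale1r.
by rewrite nR ger0_norm. Qed.

Lemma ztrick b k (m : R) : st b = b -> st k = k -> b * k = k * b ->
  b * b + k * k = m%:C *: 1 -> 0 <= m -> N b ^+ 2 <= m.
Proof.
move=> sb sk bk e m0.
set z := b + 'i *: k.
have sz : st z = b - 'i *: k by rewrite stD cs_starZ conj_i sb sk scaleNr.
have zz : st z * z = b * b + k * k.
  rewrite sz mulrDr !mulrBl -!scalerAr -!scalerAl scalerA mul_ii bk scaleN1r opprK.
  by rewrite addrA subrK.
have nz : N z ^+ 2 <= m.
  rewrite -cs_cstar zz e nR ger0_norm //. have := n1 A. have := n_ge0 (1 : A). nra.
have bz : b = h *: (z + st z).
  rewrite sz addrACA subrr addr0 scalerDr halfKs //.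
have : N b <= N z.
  rewrite bz nhalf. have := nD z (st z). rewrite n_st. lra.
have := n_ge0 b. move: nz. nra.
Qed.

Lemma fix_uniq t Y1 Y2 : Y1 + Y1 = t + Y1 * Y1 -> Y2 + Y2 = t + Y2 * Y2 ->
  N Y1 <= 1 -> N Y2 < 1 -> Y1 = Y2.
Proof.
move=> e1 e2 b1 b2. apply/eqP; rewrite -subr_eq0; apply/eqP; apply: n_le0.
have : (Y1 + Y1) - (Y2 + Y2) = (t + Y1 * Y1) - (t + Y2 * Y2) by rewrite e1 e2.
rewrite zL2 zL3 zL4 => e.
have := nDD (Y1 - Y2). rewrite e => e'.
have h1 := nD ((Y1 - Y2) * Y1) (Y2 * (Y1 - Y2)).
have h2 := nM (Y1 - Y2) Y1. have h3 := nM Y2 (Y1 - Y2).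
have := n_ge0 (Y1 - Y2). have := n_ge0 Y1. have := n_ge0 Y2. nra.
Qed.

Lemma sqrt_sq (t Y : A) : Y + Y = t + Y * Y -> (1 - Y) * (1 - Y) = 1 - t.
Proof.
move=> e. have -> : t = Y + Y - Y * Y by rewrite e addrK.
by rewrite mulrBl mul1r mulrBr mulr1 -addrA -opprD addrA.
Qed.

Lemma one_sub_sq (S : A -> Prop) x : is_cstar_subalg S -> S x -> st x = x -> N x <= 1 ->
  N (1 - x * x) <= 1.
Proof.
move=> hS Sx sx nx.
have nt : N (x * x) <= 1 by rewrite n_sa //; have := n_ge0 x; nra.
have Sxx : S (x * x) by case: hS => _ _ _ Sm _; apply: Sm.
have [Y [SY eY nY sY cY]] := sqrt_fix hS Sxx nt.
have sY' : st Y = Y by apply: sY; rewrite stM sx.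
have kk : (1 - Y) * (1 - Y) = 1 - x * x.
  exact: sqrt_sq.
have sk : st (1 - Y) = 1 - Y by rewrite stB st1 sY'.
have ck : (1 - Y) * x = x * (1 - Y).
  have xY : x * Y = Y * x by apply: cY; rewrite mulrA.
  by rewrite mulrBl mulrBr mul1r mulr1 xY.
have := ztrick sk sx ck.
rewrite kk subrK => /(_ 1). rewrite scale1r => /(_ (erefl _) ler01).
rewrite -n_sa // kk. done.
Qed.
End Z.


Definition hom_on (R : realType) (A B : cstar_algebra R) (S : A -> Prop) (f : A -> B) :=
  [/\ forall x y, S x -> S y -> f (x + y) = f x + f y,
      forall (c : R[i]) x, S x -> f (c *: x) = c *: f x,
      forall x y, S x -> S y -> f (x * y) = f x * f y,
      forall x, S x -> f (cs_star x) = cs_star (f x)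
    & f 1 = 1].

Section Hom.
Variable R : realType.
Variables A B : cstar_algebra R.
Variable S : A -> Prop.
Variable f : A -> B.
Hypothesis hS : is_cstar_subalg S.
Hypothesis hf : hom_on S f.
Local Notation NA := (@cs_norm R A).
Local Notation NB := (@cs_norm R B).
Local Notation h := ((2^-1 : R)%:C).

Lemma S1 : S 1. Proof. by case: hS. Qed.
Lemma SD x y : S x -> S y -> S (x + y). Proof. case: hS => _ H _ _ _; exact: H. Qed.
Lemma SZ c x : S x -> S (c *: x). Proof. case: hS => _ _ H _ _; exact: H. Qed.
Lemma SM x y : S x -> S y -> S (x * y). Proof. case: hS => _ _ _ H _; exact: H. Qed.
Lemma Sst x : S x -> S (cs_star x). Proof. case: hS => _ _ _ _ [H _]; exact: H. Qed.
Lemma SB x y : S x -> S y -> S (x - y). Proof. exact: subalgB. Qed.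
Lemma S0 : S 0. Proof. exact: subalg0. Qed.

Lemma fD x y : S x -> S y -> f (x + y) = f x + f y. Proof. case: hf => H _ _ _ _; exact: H. Qed.
Lemma fZ c x : S x -> f (c *: x) = c *: f x. Proof. case: hf => _ H _ _ _; exact: H. Qed.
Lemma fM x y : S x -> S y -> f (x * y) = f x * f y. Proof. case: hf => _ _ H _ _; exact: H. Qed.
Lemma fst x : S x -> f (cs_star x) = cs_star (f x). Proof. case: hf => _ _ _ H _; exact: H. Qed.
Lemma f1 : f 1 = 1. Proof. by case: hf. Qed.
Lemma f0 : f 0 = 0.
Proof. by rewrite -(scale0r (1 : A)) fZ ?scale0r //; exact: S1. Qed.
Lemma fN x : S x -> f (- x) = - f x.
Proof. by move=> Sx; rewrite -scaleN1r fZ // scaleN1r. Qed.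
Lemma fB x y : S x -> S y -> f (x - y) = f x - f y.
Proof. move=> Sx Sy; rewrite fD ?fN //; exact: subalgN. Qed.

Lemma contr_sa1 x : S x -> cs_star x = x -> NA x <= 1 -> NB (f x) <= 1.
Proof.
move=> Sx sx nx.
have nt : NA (x * x) <= 1 by rewrite n_sa //; have := n_ge0 x; nra.
have [Y [SY eY nY sY cY]] := sqrt_fix hS (SM Sx Sx) nt.
have sY' : cs_star Y = Y by apply: sY; rewrite stM sx.
have kk := sqrt_sq eY.
have Sk : S (1 - Y) by apply: SB => //; exact: S1.
have xY : x * Y = Y * x by apply: cY; rewrite mulrA.
have ck : x * (1 - Y) = (1 - Y) * x by rewrite mulrBl mulrBr mul1r mulr1 xY.
have e : f x * f x + f (1 - Y) * f (1 - Y) = (1 : R)%:C *: 1.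
  have Sxx : S (x * x) by exact: SM.
  rewrite -(fM Sx Sx) -(fM Sk Sk) kk -fD //; last by apply: SB => //; exact: S1.
  by rewrite addrC subrK f1 scale1r.
have sfx : cs_star (f x) = f x by rewrite -fst // sx.
have sfk : cs_star (f (1 - Y)) = f (1 - Y) by rewrite -fst // stB st1 sY'.
have cf : f x * f (1 - Y) = f (1 - Y) * f x by rewrite -!fM // ck.
have := ztrick sfx sfk cf e ler01. have := n_ge0 (f x). nra.
Qed.

Lemma contr_sa x : S x -> cs_star x = x -> NB (f x) <= NA x.
Proof.
move=> Sx sx. have [/n_eq0 ->|nx] := eqVneq (NA x) 0; first by rewrite f0 !n0.
have px : 0 < NA x by rewrite lt0r nx n_ge0.
set l := (NA x)^-1.
have lp : 0 < l by rewrite invr_gt0.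
have Sx1 : S (l%:C *: x) by exact: SZ.
have := @contr_sa1 (l%:C *: x) Sx1.
rewrite stR sx nR ger0_norm ?(ltW lp) // fZ // nR ger0_norm ?(ltW lp) //.
have e : l * NA x = 1 by rewrite mulVf.
rewrite e => /(_ (erefl _) (lexx _)) H.
have := n_ge0 (f x). nra.
Qed.

Lemma contr x : S x -> NB (f x) <= NA x.
Proof.
move=> Sx. have Sy : S (cs_star x * x) by apply: SM => //; exact: Sst.
have := contr_sa Sy. rewrite stM stK => /(_ (erefl _)).
rewrite (fM (Sst Sx) Sx) (fst Sx) !cs_cstar. have := n_ge0 (f x). have := n_ge0 x. nra.
Qed.

Hypothesis finj : forall x y, S x -> S y -> f x = f y -> x = y.

Lemma isom_sa x : S x -> cs_star x = x -> NA x <= NB (f x).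
Proof.
move=> Sx sx. have [//|lt] := leP (NA x) (NB (f x)). exfalso.
have px : 0 < NA x by apply: le_lt_trans lt; exact: n_ge0.
set l := (NA x)^-1. have lp : 0 < l by rewrite invr_gt0.
set x1 := l%:C *: x.
have Sx1 : S x1 by exact: SZ.
have sx1 : cs_star x1 = x1 by rewrite /x1 stR sx.
have nx1 : NA x1 = 1 by rewrite /x1 nR ger0_norm ?(ltW lp) // mulVf // gt_eqF.
set b := f x1. set c := NB b.
have c0 : 0 <= c := n_ge0 _.
have c1 : c < 1.
  rewrite /c /b /x1 fZ // nR ger0_norm ?(ltW lp) // /l.
  rewrite ltr_pdivrMl //. by rewrite mulr1.
clearbody x1.
set d : R := 2^-1 * (1 + c * c).
set p := x1 * x1. have Sp : S p by exact: SM.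
have sp : cs_star p = p by rewrite /p stM sx1.
have np : NA p = 1 by rewrite /p n_sa // nx1 expr1n.
set x2 := h *: (p - d%:C *: 1).
have Sx2 : S x2 by apply: SZ; apply: SB => //; apply: SZ; exact: S1.
have sx2 : cs_star x2 = x2 by rewrite /x2 stR stB stR st1 sp.
have nx2 : NA x2 <= 1.
  rewrite /x2 nhalf. have := nB p (d%:C *: 1). rewrite nR np.
  have := n1 A. have := n_ge0 (1 : A). rewrite ger0_norm; last by rewrite /d; nra.
  rewrite /d. nra.
set t := 1 - x2 * x2.
have St : S t by apply: SB; [exact: S1 | exact: SM].
have st_t : cs_star t = t by rewrite /t stB st1 stM sx2.
have nt := one_sub_sq hS Sx2 sx2 nx2.
have [Y [SY eY nY sY cY]] := sqrt_fix hS St nt.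
have sY' := sY st_t.
have sb : cs_star b = b by rewrite /b -fst // sx1.
have nbb : NB (b * b) = c ^+ 2 by rewrite n_sa.
have fx2 : f x2 = h *: (b * b - d%:C *: 1).
  rewrite /x2 fZ; last by apply: SB => //; apply: SZ; exact: S1.
  rewrite fB //; last by apply: SZ; exact: S1.
  rewrite fZ; last exact: S1. rewrite f1 /p fM //.
have Sxx : S (x2 * x2) by exact: SM.
have ft : f t = 1 - f x2 * f x2 by rewrite /t (fB S1 Sxx) f1 (fM Sx2 Sx2).
have SYY : S (Y * Y) by exact: SM.
have eY' : f Y + f Y = f t + f Y * f Y by rewrite -fM // -fD // -fD // eY.
have nY' : NB (f Y) <= 1 by apply: le_trans (contr SY) nY.
set W := 1 + f x2.
have eW : W + W = f t + W * W.
  rewrite ft /W mulrDl !mulrDr mul1r mulr1 mul1r.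
  by rewrite [RHS]addrC -[RHS]addrA [X in _ = _ + X]addrACA subrr addr0 (addrC (f x2) 1).
have nW : NB W < 1.
  have -> : W = (1 - 2^-1 * d)%:C *: 1 + h *: (b * b).
    rewrite /W fx2 scalerBr scalerA -rmorphM rmorphB rmorph1 scalerBl scale1r.
    by rewrite [LHS]addrCA [RHS]addrC.
  apply: le_lt_trans (nD _ _) _. rewrite nR nR nbb.
  have dc : c * c < d by rewrite /d; nra.
  rewrite [`|2^-1|]ger0_norm; last by rewrite invr_ge0.
  rewrite ger0_norm; last by rewrite /d; nra.
  have hd : 0 <= 1 - 2^-1 * d by rewrite /d; nra.
  have t1 : (1 - 2^-1 * d) * NB 1 <= 1 - 2^-1 * d.
    by rewrite ler_piMr // n1.
  rewrite expr2. lra.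
have fYW := fix_uniq eY' eW nY' nW.
have S1Y : S (1 - Y) by apply: SB => //; exact: S1.
have z0 : x2 + (1 - Y) = 0.
  apply: finj; [exact: SD | exact: S0 |].
  rewrite f0 (fD Sx2 S1Y) (fB S1 SY) f1 fYW /W.
  by rewrite addrA [f x2 + 1]addrC subrr.
have nY1 : NA Y <= 1 := nY.
have [Y2 [SY2 eY2 nY2 sY2 cY2]] := sqrt_fix hS SY nY1.
have sY2' := sY2 sY'.
have kk := sqrt_sq eY2.
have kkx : (1 - Y2) * (1 - Y2) = - x2.
  by rewrite kk; apply/eqP; rewrite -addr_eq0 addrC z0.
set k' := (Num.sqrt (2 : R))%:C *: (1 - Y2).
have sk' : cs_star k' = k' by rewrite /k' stR stB st1 sY2'.
have x1p : x1 * p = p * x1 by rewrite /p mulrA.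
have x1x2 : x1 * x2 = x2 * x1.
  by rewrite /x2 -scalerAr -scalerAl mulrBr mulrBl x1p -scalerAr -scalerAl mulr1 mul1r.
have x1t : x1 * t = t * x1.
  by rewrite /t mulrBr mulrBl mulr1 mul1r mulrA x1x2 -!mulrA x1x2.
have x1Y : x1 * Y = Y * x1 by apply: cY.
have x1Y2 : x1 * Y2 = Y2 * x1 by apply: cY2.
have ck : x1 * k' = k' * x1.
  by rewrite /k' -scalerAr -scalerAl mulrBr mulrBl mulr1 mul1r x1Y2.
have e2 : x1 * x1 + k' * k' = d%:C *: 1.
  have s2 : Num.sqrt (2:R) * Num.sqrt 2 = 2 by rewrite -expr2 sqr_sqrtr // ler0n.
  rewrite /k' -scalerAr -scalerAl scalerA -rmorphM s2.
  rewrite kkx /x2 scalerN scalerA -rmorphM mulfV ?pnatr_eq0 // rmorph1 scale1r.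
  by rewrite opprB addrC subrK.
have := ztrick sx1 sk' ck e2. rewrite nx1 expr1n.
have dp : 0 <= d by rewrite /d; nra.
move=> /(_ dp). rewrite /d. nra.
Qed.

Lemma isom x : S x -> NA x <= NB (f x).
Proof.
move=> Sx. have Sy : S (cs_star x * x) by apply: SM => //; exact: Sst.
have := isom_sa Sy. rewrite stM stK => /(_ (erefl _)).
rewrite (fM (Sst Sx) Sx) (fst Sx) !cs_cstar. have := n_ge0 (f x). have := n_ge0 x. nra.
Qed.
End Hom.


Section Gen.
Variable R : realType.

Lemma gen_subalg (A : cstar_algebra R) (X : A -> Prop) : is_cstar_subalg (cstar_gen X).
Proof.
split.
- by move=> S [].
- by move=> x y hx hy S hS hX; case: (hS) => _ H _ _ _; apply: H; [apply: hx|apply: hy].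
- by move=> c x hx S hS hX; case: (hS) => _ _ H _ _; apply: H; apply: hx.
- by move=> x y hx hy S hS hX; case: (hS) => _ _ _ H _; apply: H; [apply: hx|apply: hy].
split.
- by move=> x hx S hS hX; case: (hS) => _ _ _ _ [H _]; apply: H; apply: hx.
- move=> u l hu cu S hS hX; case: (hS) => _ _ _ _ [_ H]; apply: H cu => n; exact: hu.
Qed.

Lemma gen_incl (A : cstar_algebra R) (X : A -> Prop) x : X x -> cstar_gen X x.
Proof. by move=> hx S _ hX; apply: hX. Qed.

Lemma full_subalg (A : cstar_algebra R) : is_cstar_subalg (fun _ : A => True).
Proof. by split. Qed.

Lemma morph_hom (A B : cstar_algebra R) (f : A -> B) : star_morph f -> hom_on (fun _ => True) f.
Proof.
case=> h1 h2 h3 h4 h5; split.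
- by move=> x y _ _; apply: h1.
- by move=> c x _; apply: h2.
- by move=> x y _ _; apply: h3.
- by move=> x _; apply: h4.
- exact: h5.
Qed.

Lemma iso_hom (A B : cstar_algebra R) (S : A -> Prop) (T : B -> Prop) f :
  is_cstar_subalg S -> is_cstar_subalg T -> star_iso_on S T f -> hom_on S f.
Proof.
move=> hS hT [h1 h2 h3 h4 [h5 h6 h7]]. split=> //.
have [x Sx fx] := h7 1 (S1 hT).
have := h3 1 x (S1 hS) Sx. by rewrite mul1r fx mulr1 => ->.
Qed.

Lemma hom_comp (A B C : cstar_algebra R) (S : A -> Prop) (T : B -> Prop) (f : A -> B) (g : B -> C) :
  hom_on S f -> hom_on T g -> (forall x, S x -> T (f x)) -> is_cstar_subalg S ->
  hom_on S (fun x => g (f x)).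
Proof.
move=> hf hg hST hS. split.
- by move=> x y Sx Sy; rewrite (fD hf) // (fD hg) //; apply: hST.
- by move=> c x Sx; rewrite (fZ hf) // (fZ hg) //; apply: hST.
- by move=> x y Sx Sy; rewrite (fM hf) // (fM hg) //; apply: hST.
- by move=> x Sx; rewrite (fst hf) // (fst hg) //; apply: hST.
- by rewrite (f1 hf) (f1 hg).
Qed.

Lemma closure_match (A1 A2 C : cstar_algebra R) (X : A1 -> Prop) (S2 : A2 -> Prop)
    (P : A1 -> C) (Q : A2 -> C) :
  is_cstar_subalg S2 -> hom_on (cstar_gen X) P -> hom_on S2 Q ->
  (forall x, cstar_gen X x -> cs_norm (P x) <= cs_norm x) ->
  (forall y, S2 y -> cs_norm y <= cs_norm (Q y)) ->
  (forall x, X x -> exists2 y, S2 y & Q y = P x) ->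
  forall x, cstar_gen X x -> exists2 y, S2 y & Q y = P x.
Proof.
move=> hS2 hP hQ cP bQ hX.
have hS1 := gen_subalg X.
pose T x := cstar_gen X x /\ exists2 y, S2 y & Q y = P x.
suff hT : is_cstar_subalg T.
  move=> x hx. have hTx : T x := hx T hT (fun y Xy => conj (gen_incl Xy) (hX y Xy)).
  by case: hTx.
split.
- split; first exact: (S1 hS1). exists 1; first exact: (S1 hS2). by rewrite (f1 hQ) (f1 hP).
- move=> x x' [Sx [y Sy ey]] [Sx' [y' Sy' ey']]; split; first exact: (SD hS1).
  exists (y + y'); first exact: (SD hS2). by rewrite (fD hQ) // ey ey' (fD hP).
- move=> c x [Sx [y Sy ey]]; split; first exact: (SZ hS1).
  exists (c *: y); first exact: (SZ hS2). by rewrite (fZ hQ) // ey (fZ hP).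
- move=> x x' [Sx [y Sy ey]] [Sx' [y' Sy' ey']]; split; first exact: (SM hS1).
  exists (y * y'); first exact: (SM hS2). by rewrite (fM hQ) // ey ey' (fM hP).
split.
- move=> x [Sx [y Sy ey]]; split; first exact: (Sst hS1).
  exists (cs_star y); first exact: (Sst hS2). by rewrite (fst hQ) // ey (fst hP).
move=> u l hu cu.
have Sl : cstar_gen X l by case: (hS1) => _ _ _ _ [_ H]; apply: H cu => n; case: (hu n).
split=> //.
have [y yP] : exists y : nat -> A2, forall n, S2 (y n) /\ Q (y n) = P (u n).
  exists (fun n => ClassicalEpsilon.epsilon (inhabits (0 : A2)) (fun y => S2 y /\ Q y = P (u n))).
  move=> n; apply: (@ClassicalEpsilon.epsilon_spec _ (inhabits (0 : A2)) (fun y => S2 y /\ Q y = P (u n))).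
  case: (hu n) => _ [z Sz ez]. by exists z.
have Su : forall n, cstar_gen X (u n) by move=> n; case: (hu n).
have ycau : forall m n, cs_norm (y m - y n) <= cs_norm (u m - u n).
  move=> m n. have [Sm em] := yP m. have [Sn en] := yP n.
  apply: (le_trans (bQ _ (SB hS2 Sm Sn))).
  rewrite (fB hS2 hQ Sm Sn) em en -(fB hS1 hP (Su m) (Su n)).
  exact: cP (SB hS1 (Su m) (Su n)).
have [yl cy] : exists yl, cs_cvg y yl.
  apply: cauchy_cvg => e e0. have [N0 hN] := cvg_cauchy cu e0.
  exists N0 => m n hm hn. exact: le_lt_trans (ycau m n) (hN m n hm hn).
have Syl : S2 yl by case: (hS2) => _ _ _ _ [_ H]; apply: H cy => n; case: (yP n).
exists yl => //.
apply/eqP; rewrite -subr_eq0; apply/eqP; apply: n_le0.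
apply: (@cvg_bound2 _ _ _ _ _ _ _ _ 0 1 _ cy cu) => // n.
have [Sn en] := yP n.
apply: le_trans (n_tri _ (Q (y n)) _) _.
rewrite add0r mul1r -(fB hS2 hQ Syl Sn) en -(fB hS1 hP (Su n) Sl).
apply: lerD; last exact: cP (SB hS1 (Su n) Sl).
apply: le_trans (contr hS2 hQ (SB hS2 Syl Sn)) _. by rewrite nBC.
Qed.
End Gen.


Section Pre.
Variable R : realType.

Lemma hom_restr (A B : cstar_algebra R) (S : A -> Prop) (f : A -> B) :
  hom_on (fun _ => True) f -> hom_on S f.
Proof. case=> h1 h2 h3 h4 h5; split=> // *; [exact: h1|exact: h2|exact: h3|exact: h4]. Qed.

Lemma preimage_subalg (A B : cstar_algebra R) (T : B -> Prop) (f : A -> B) :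
  hom_on (fun _ => True) f -> is_cstar_subalg T -> is_cstar_subalg (fun x => T (f x)).
Proof.
move=> hf hT. have hU := full_subalg A. split.
- by rewrite (f1 hf); exact: (S1 hT).
- by move=> x y hx hy; rewrite (fD hf) //; exact: (SD hT).
- by move=> c x hx; rewrite (fZ hf) //; exact: (SZ hT).
- by move=> x y hx hy; rewrite (fM hf) //; exact: (SM hT).
split.
- by move=> x hx; rewrite (fst hf) //; exact: (Sst hT).
move=> u l hu cu. case: (hT) => _ _ _ _ [_ H]. apply: H hu _ => e e0.
have [N0 hN] := cu e e0. exists N0 => n hn.
rewrite -(fB hU hf) //. exact: le_lt_trans (contr hU hf _) (hN n hn).
Qed.
End Pre.


End Aux.
Import Aux.
Unset Implicit Arguments. Set Strict Implicit. Set Printing Implicit Defensive.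
Import Order.TTheory GRing.Theory Num.Theory.
Local Open Scope ring_scope.


Theorem lemma5p4 (R : realType) (d : Order.disp_t) (K : porderType d)
    (A B : K -> cstar_algebra R)
    (j : forall a o : K, A a -> A o) (i : forall a o : K, B a -> B o)
    (psi : forall o : K, A o -> B o) :
  is_net j -> is_net i -> net_mono j i psi ->
  forall (F : K -> Prop) (ot o : K),
    (exists a, F a) ->
    (forall a, F a -> (a <= ot)%O /\ (a <= o)%O) ->
    cech_defined i F ot o -> cech_defined j F ot o.
Proof.
move=> [jm jc] [im ic] [pm pc] F ot o _ Fle [xi [xiiso xigen]].
have hAF : forall o', is_cstar_subalg (loc_alg j F (o:=o')) := fun o' => gen_subalg _.
have hBF : forall o', is_cstar_subalg (loc_alg i F (o:=o')) := fun o' => gen_subalg _.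
have hpsi : forall o', hom_on (fun _ => True) (psi o') := fun o' => morph_hom (proj1 (pm o')).
have pinj : forall o', injective (psi o') := fun o' => proj2 (pm o').
have hU : forall o', is_cstar_subalg (fun _ : A o' => True) := fun o' => full_subalg _.
have hxi := iso_hom (hBF o) (hBF ot) xiiso.
case: xiiso => _ _ _ _ [xiT xiinj xisurj].
have psi_in : forall o', (forall a, F a -> (a <= o')%O) ->
    forall x, loc_alg j F (o:=o') x -> loc_alg i F (o:=o') (psi o' x).
  move=> o' le x hx. apply: (hx (fun x => loc_alg i F (o:=o') (psi o' x))); first exact: preimage_subalg (hpsi o') (hBF o').
  move=> y [a [x0 Fa ->]]. rewrite (pc _ _ (le a Fa)). apply: gen_incl.
  by exists a; exists (psi a x0).
have pin_o := psi_in o (fun a Fa => proj2 (Fle a Fa)).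
have pin_ot := psi_in ot (fun a Fa => proj1 (Fle a Fa)).
have hP : hom_on (loc_alg j F (o:=o)) (fun x => xi (psi o x)).
  by apply: hom_comp (hom_restr _ (hpsi o)) hxi pin_o (hAF o).
have cP : forall x, loc_alg j F (o:=o) x -> cs_norm (xi (psi o x)) <= cs_norm x.
  move=> x hx. apply: le_trans (contr (hBF o) hxi (pin_o _ hx)) _.
  exact: (contr (hU o) (hpsi o)).
have bP : forall x, loc_alg j F (o:=o) x -> cs_norm x <= cs_norm (xi (psi o x)).
  move=> x hx. apply: le_trans (isom (hU o) (hpsi o) _ (I : True)) _.
    by move=> ? ? _ _; apply: pinj.
  exact: (isom (hBF o) hxi xiinj (pin_o _ hx)).
have hQ : hom_on (loc_alg j F (o:=ot)) (psi ot) := hom_restr _ (hpsi ot).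
have cQ : forall y, loc_alg j F (o:=ot) y -> cs_norm (psi ot y) <= cs_norm y.
  move=> y _; exact: (contr (hU ot) (hpsi ot)).
have bQ : forall y, loc_alg j F (o:=ot) y -> cs_norm y <= cs_norm (psi ot y).
  move=> y _. apply: (isom (hU ot) (hpsi ot)) => // ? ? _ _; apply: pinj.
have gen_eq : forall a, F a -> forall x0,
    psi ot (j a ot x0) = xi (psi o (j a o x0)).
  move=> a Fa x0. have [le1 le2] := Fle a Fa.
  by rewrite (pc _ _ le1) (pc _ _ le2) xigen.
have step2 : forall x, loc_alg j F (o:=o) x ->
    exists2 y, loc_alg j F (o:=ot) y & psi ot y = xi (psi o x).
  apply: closure_match (hAF ot) hP hQ cP bQ _.
  move=> x [a [x0 Fa ->]]. exists (j a ot x0); last exact: gen_eq.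
  by apply: gen_incl; exists a; exists x0.
have step3 : forall y, loc_alg j F (o:=ot) y ->
    exists2 x, loc_alg j F (o:=o) x & xi (psi o x) = psi ot y.
  apply: closure_match (hAF o) hQ hP cQ bP _.
  move=> y [a [x0 Fa ->]]. exists (j a o x0); last by rewrite gen_eq.
  by apply: gen_incl; exists a; exists x0.
pose zeta x := ClassicalEpsilon.epsilon (inhabits (0 : A ot))
  (fun y => loc_alg j F (o:=ot) y /\ psi ot y = xi (psi o x)).
have zP : forall x, loc_alg j F (o:=o) x ->
    loc_alg j F (o:=ot) (zeta x) /\ psi ot (zeta x) = xi (psi o x).
  move=> x hx. apply: (@ClassicalEpsilon.epsilon_spec _ (inhabits (0 : A ot))
     (fun y => loc_alg j F (o:=ot) y /\ psi ot y = xi (psi o x))).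
  have [y hy ey] := step2 x hx. by exists y.
have hpo := hpsi ot.
exists zeta; split; last first.
  move=> a Fa x0. apply: pinj.
  have hx : loc_alg j F (o:=o) (j a o x0) by apply: gen_incl; exists a; exists x0.
  by rewrite (proj2 (zP _ hx)) gen_eq.
split.
- move=> x y hx hy. apply: pinj. rewrite (fD hpo) // (proj2 (zP _ (SD (hAF o) hx hy))).
  by rewrite (fD hP) // (proj2 (zP _ hx)) (proj2 (zP _ hy)).
- move=> c x hx. apply: pinj. rewrite (fZ hpo) // (proj2 (zP _ (SZ (hAF o) c hx))).
  by rewrite (fZ hP) // (proj2 (zP _ hx)).
- move=> x y hx hy. apply: pinj. rewrite (fM hpo) // (proj2 (zP _ (SM (hAF o) hx hy))).
  by rewrite (fM hP) // (proj2 (zP _ hx)) (proj2 (zP _ hy)).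
- move=> x hx. apply: pinj. rewrite (fst hpo) // (proj2 (zP _ (Sst (hAF o) hx))).
  by rewrite (fst hP) // (proj2 (zP _ hx)).
split.
- by move=> x hx; case: (zP _ hx).
- move=> x y hx hy e. apply: pinj. apply: xiinj; try exact: pin_o.
  by rewrite -(proj2 (zP _ hx)) -(proj2 (zP _ hy)) e.
- move=> z hz. have [x hx ex] := step3 z hz. exists x => //.
  apply: pinj. by rewrite (proj2 (zP _ hx)) ex.
Qed.
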